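(* Let $A$ be a right faithful Banach algebra. If $A^* = \langle A^*\triangle A^{**}\rangle$, then the norm of $A$ is equivalent on $A$ to its right multiplier norm $\|a\|_{r}=\sup_{\|x\|_A\le 1}\|xa\|_A$. Symmetrically, if $A$ is left faithful and $A^* = \langle A^{**}\square A^*\rangle$, then the norm of $A$ is equivalent to its left multiplier norm $\|a\|_{l}=\sup_{\|x\|_A\le 1}\|ax\|_A$.
   Context: Arens-type module actions: for a Banach algebra $A$, $a,b\in A$, $f\in A^*$, $m\in A^{**}$, define $f\square a\in A^*$ by $\langle f\square a,b\rangle=\langle f,ab\rangle$ and $m\square f\in A^*$ by $\langle m\square f,a\rangle=\langle m,f\square a\rangle$; define $a\triangle f\in A^*$ by $\langle a\triangle f,b\rangle=\langle f,ba\rangle$ and $f\triangle m\in A^*$ by $\langle f\triangle m,a\rangle=\langle m,a\triangle f\rangle$. $\langle A^*\triangle A^{**}\rangle$ denotes the linear span of $\{f\triangle m: f\in A^*, m\in A^{**}\}$, and similarly for $\langle A^{**}\square A^*\rangle$. $A$ is right faithful if $xa=0$ for all $x\in A$ implies $a=0$ (so that $a\mapsto$ right multiplication by $a$ embeds $A$ injectively into its right multiplier algebra, with norm $\|\cdot\|_r$); left faithful is defined symmetrically. *)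

(* Defs.v *)
From Stdlib Require Import Reals List.
Open Scope R_scope.

Record C := mkC { re : R; im : R }.
Definition C0 : C := mkC 0 0.
Definition C1 : C := mkC 1 0.
Definition Cadd (z w : C) : C := mkC (re z + re w) (im z + im w).
Definition Copp (z : C) : C := mkC (- re z) (- im z).
Definition Cmul (z w : C) : C :=
  mkC (re z * re w - im z * im w) (re z * im w + im z * re w).
Definition Cmod (z : C) : R := sqrt (re z ^ 2 + im z ^ 2).

Record BanachAlgebra := {
  car :> Type;
  add : car -> car -> car;
  zero : car;
  opp : car -> car;
  scal : C -> car -> car;
  mul : car -> car -> car;
  norm : car -> R;
  add_assoc : forall a b c, add a (add b c) = add (add a b) c;
  add_comm : forall a b, add a b = add b a;
  add_zero : forall a, add a zero = a;
  add_opp : forall a, add a (opp a) = zero;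
  scal_one : forall a, scal C1 a = a;
  scal_assoc : forall z w a, scal z (scal w a) = scal (Cmul z w) a;
  scal_addl : forall z w a, scal (Cadd z w) a = add (scal z a) (scal w a);
  scal_addr : forall z a b, scal z (add a b) = add (scal z a) (scal z b);
  mul_assoc : forall a b c, mul a (mul b c) = mul (mul a b) c;
  mul_addl : forall a b c, mul (add a b) c = add (mul a c) (mul b c);
  mul_addr : forall a b c, mul a (add b c) = add (mul a b) (mul a c);
  mul_scall : forall z a b, mul (scal z a) b = scal z (mul a b);
  mul_scalr : forall z a b, mul a (scal z b) = scal z (mul a b);
  norm_nonneg : forall a, 0 <= norm a;
  norm_eq0 : forall a, norm a = 0 -> a = zero;
  norm_triangle : forall a b, norm (add a b) <= norm a + norm b;
  norm_scal : forall z a, norm (scal z a) = Cmod z * norm a;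
  norm_submult : forall a b, norm (mul a b) <= norm a * norm b;
  complete : forall u : nat -> car,
    (forall eps, eps > 0 -> exists N, forall n m, (n >= N)%nat -> (m >= N)%nat ->
        norm (add (u n) (opp (u m))) < eps) ->
    exists l, forall eps, eps > 0 -> exists N, forall n, (n >= N)%nat ->
        norm (add (u n) (opp l)) < eps
}.

Section Duals.
Variable A : BanachAlgebra.

Definition in_dual (f : A -> C) : Prop :=
  (forall a b, f (add A a b) = Cadd (f a) (f b)) /\
  (forall z a, f (scal A z a) = Cmul z (f a)) /\
  (exists M, forall a, Cmod (f a) <= M * norm A a).

(* "K bounds f", i.e. ||f|| <= K for the dual norm *)
Definition dual_bound (f : A -> C) (K : R) : Prop :=
  0 <= K /\ forall a, Cmod (f a) <= K * norm A a.

Definition in_bidual (m : (A -> C) -> C) : Prop :=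
  (forall f g, in_dual f -> in_dual g ->
     m (fun a => Cadd (f a) (g a)) = Cadd (m f) (m g)) /\
  (forall z f, in_dual f -> m (fun a => Cmul z (f a)) = Cmul z (m f)) /\
  (exists M, forall f K, in_dual f -> dual_bound f K -> Cmod (m f) <= M * K).

(* Arens-type actions *)
Definition sq_fa (f : A -> C) (a : A) : A -> C := fun b => f (mul A a b).
Definition sq_mf (m : (A -> C) -> C) (f : A -> C) : A -> C :=
  fun a => m (sq_fa f a).
Definition tr_af (a : A) (f : A -> C) : A -> C := fun b => f (mul A b a).
Definition tr_fm (f : A -> C) (m : (A -> C) -> C) : A -> C :=
  fun a => m (tr_af a f).

Definition Csum (l : list C) : C := fold_right Cadd C0 l.

Definition dual_spanned_by_tr : Prop :=
  forall f, in_dual f ->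
    exists l : list (C * (A -> C) * ((A -> C) -> C)),
      (forall c g m, In (c, g, m) l -> in_dual g /\ in_bidual m) /\
      forall a, f a = Csum (map (fun t => let '(c, g, m) := t in
                                 Cmul c (tr_fm g m a)) l).

Definition dual_spanned_by_sq : Prop :=
  forall f, in_dual f ->
    exists l : list (C * ((A -> C) -> C) * (A -> C)),
      (forall c m g, In (c, m, g) l -> in_bidual m /\ in_dual g) /\
      forall a, f a = Csum (map (fun t => let '(c, m, g) := t in
                                 Cmul c (sq_mf m g a)) l).

Definition right_faithful : Prop :=
  forall a, (forall x, mul A x a = zero A) -> a = zero A.
Definition left_faithful : Prop :=
  forall a, (forall x, mul A a x = zero A) -> a = zero A.

Definition is_rnorm (a : A) (s : R) : Prop :=
  is_lub (fun r => exists x, norm A x <= 1 /\ r = norm A (mul A x a)) s.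
Definition is_lnorm (a : A) (s : R) : Prop :=
  is_lub (fun r => exists x, norm A x <= 1 /\ r = norm A (mul A a x)) s.

End Duals.

(* Main.v *)
Require Import Defs.
From Stdlib Require Import Reals List Lra Lia Classical ClassicalEpsilon.
From Coquelicot Require Import Hierarchy Series.
From mathcomp Require classical_sets boolp.
Require Import Defs.
Open Scope R_scope.

Section Basics.
Variable A : BanachAlgebra.

Definition rs (t : R) (x : A) : A := scal A (mkC t 0) x.

Lemma C_eq (z w : C) : re z = re w -> im z = im w -> z = w.
Proof. destruct z, w; simpl; intros; subst; reflexivity. Qed.

Lemma add_cancel (x y : A) : add A x y = x -> y = zero A.
Proof.
  intro H.
  assert (E: add A (opp A x) (add A x y) = add A (opp A x) x) by (rewrite H; reflexivity).
  rewrite add_assoc, (add_comm A (opp A x) x), add_opp, add_comm, add_zero in E.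
  exact E.
Qed.

Lemma rs_plus s t x : rs (s + t) x = add A (rs s x) (rs t x).
Proof. unfold rs. rewrite <- scal_addl. f_equal. apply C_eq; simpl; ring. Qed.

Lemma rs_rs s t x : rs s (rs t x) = rs (s * t) x.
Proof. unfold rs. rewrite scal_assoc. f_equal. apply C_eq; simpl; ring. Qed.

Lemma rs_add s x y : rs s (add A x y) = add A (rs s x) (rs s y).
Proof. unfold rs. apply scal_addr. Qed.

Lemma rs1 x : rs 1 x = x.
Proof. apply scal_one. Qed.

Lemma rs0 x : rs 0 x = zero A.
Proof.
  apply (add_cancel (rs 0 x)). rewrite <- rs_plus. f_equal; ring.
Qed.

Lemma scal0 x : scal A C0 x = zero A.
Proof. apply rs0. Qed.

Lemma Cmod_real t : Cmod (mkC t 0) = Rabs t.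
Proof. unfold Cmod; simpl. rewrite <- sqrt_Rsqr_abs. f_equal. unfold Rsqr. ring. Qed.

Lemma norm_zero : norm A (zero A) = 0.
Proof. rewrite <- (rs0 (zero A)). unfold rs. rewrite norm_scal, Cmod_real, Rabs_R0. ring. Qed.

Lemma norm_rs t x : norm A (rs t x) = Rabs t * norm A x.
Proof. unfold rs. rewrite norm_scal, Cmod_real. reflexivity. Qed.

Lemma mul_zero_l x : mul A (zero A) x = zero A.
Proof. rewrite <- (rs0 x) at 1. unfold rs. rewrite mul_scall. apply rs0. Qed.

Lemma add_zero_l x : add A (zero A) x = x.
Proof. rewrite add_comm. apply add_zero. Qed.

Lemma add_neg x : add A x (rs (-1) x) = zero A.
Proof. rewrite <- (rs1 x) at 1. rewrite <- rs_plus. replace (1 + -1) with 0 by ring. apply rs0. Qed.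

Lemma Rabs_re_le z : Rabs (re z) <= Cmod z.
Proof. unfold Cmod. rewrite <- sqrt_Rsqr_abs. apply sqrt_le_1_alt. unfold Rsqr. simpl.
  pose proof (pow2_ge_0 (im z)). nra. Qed.

Lemma Rabs_im_le z : Rabs (im z) <= Cmod z.
Proof. unfold Cmod. rewrite <- sqrt_Rsqr_abs. apply sqrt_le_1_alt. unfold Rsqr. simpl.
  pose proof (pow2_ge_0 (re z)). nra. Qed.




Lemma Cmod_le_sum z : Cmod z <= Rabs (re z) + Rabs (im z).
Proof. unfold Cmod. rewrite <- (sqrt_Rsqr (Rabs (re z) + Rabs (im z))).
  2:{ pose proof (Rabs_pos (re z)); pose proof (Rabs_pos (im z)); lra. }
  apply sqrt_le_1_alt. unfold Rsqr. 
  pose proof (Rabs_pos (re z)); pose proof (Rabs_pos (im z)).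
  assert (re z ^ 2 = Rabs (re z) * Rabs (re z)) by (rewrite <- Rabs_mult, Rabs_right; [ring| nra]).
  assert (im z ^ 2 = Rabs (im z) * Rabs (im z)) by (rewrite <- Rabs_mult, Rabs_right; [ring| nra]).
  nra. Qed.

Lemma Cmod_nonneg z : 0 <= Cmod z.
Proof. apply sqrt_pos. Qed.

Lemma Cmod_mul z w : Cmod (Cmul z w) = Cmod z * Cmod w.
Proof. unfold Cmod. rewrite <- sqrt_mult. f_equal. simpl. ring.
  all: pose proof (pow2_ge_0 (re z)); pose proof (pow2_ge_0 (im z));
  pose proof (pow2_ge_0 (re w)); pose proof (pow2_ge_0 (im w)); lra. Qed.

End Basics.

Section Rnorm.
Variable A : BanachAlgebra.

Lemma rnorm_exists (a : A) : exists s, is_rnorm A a s.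
Proof.
  destruct (completeness (fun r => exists x, norm A x <= 1 /\ r = norm A (mul A x a))) as [s Hs].
  - exists (norm A a). intros r [x [Hx ->]].
    eapply Rle_trans; [apply norm_submult|].
    pose proof (norm_nonneg A a). pose proof (norm_nonneg A x). nra.
  - exists (norm A (mul A (zero A) a)). exists (zero A). split; [rewrite norm_zero; lra|reflexivity].
  - exists s; exact Hs.
Qed.

Lemma rnorm_props (a : A) s : is_rnorm A a s ->
  0 <= s /\ s <= norm A a /\ forall x, norm A (mul A x a) <= s * norm A x.
Proof.
  intros [Hub Hlub].
  assert (H0 : 0 <= s).
  { apply Rle_trans with (norm A (mul A (zero A) a)); [apply norm_nonneg|].
    apply Hub. exists (zero A). split; [rewrite norm_zero; lra|reflexivity]. }
  split; [exact H0|split].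
  - apply Hlub. intros r [x [Hx ->]].
    eapply Rle_trans; [apply norm_submult|].
    pose proof (norm_nonneg A a). pose proof (norm_nonneg A x). nra.
  - intros x. destruct (Req_dec (norm A x) 0) as [E|E].
    + apply norm_eq0 in E. subst x. rewrite mul_zero_l, norm_zero. lra.
    + pose proof (norm_nonneg A x) as Hn.
      assert (Hp : 0 < norm A x) by lra.
      assert (Hx' : norm A (rs A (/ norm A x) x) = 1).
      { rewrite norm_rs, Rabs_right. field. lra. left. apply Rinv_0_lt_compat. lra. }
      assert (Hle : norm A (mul A (rs A (/ norm A x) x) a) <= s).
      { apply Hub. exists (rs A (/ norm A x) x). split; [lra|reflexivity]. }
      unfold rs in Hle. rewrite mul_scall in Hle. fold (rs A (/ norm A x) (mul A x a)) in Hle.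
      rewrite norm_rs, Rabs_right in Hle. 2:{ left. apply Rinv_0_lt_compat. lra. }
      apply (Rmult_le_compat_l (norm A x)) in Hle; [|lra].
      rewrite <- Rmult_assoc, Rinv_r, Rmult_1_l in Hle; lra.
Qed.

Lemma in_dual_nonneg (g : A -> C) : in_dual A g -> exists B, 0 <= B /\ forall y, Cmod (g y) <= B * norm A y.
Proof.
  intros [_ [_ [M HM]]]. exists (Rmax M 0). split; [apply Rmax_r|].
  intros y. eapply Rle_trans; [apply HM|]. apply Rmult_le_compat_r; [apply norm_nonneg|apply Rmax_l].
Qed.

Lemma tr_af_dual (a : A) g : in_dual A g -> in_dual A (tr_af A a g).
Proof.
  intros Hg. pose proof (in_dual_nonneg g Hg) as [B [HB HBy]].
  destruct Hg as [Hadd [Hsc _]]. unfold tr_af. split; [|split].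
  - intros x y. rewrite mul_addl. apply Hadd.
  - intros z x. rewrite mul_scall. apply Hsc.
  - exists (B * norm A a). intros x. eapply Rle_trans; [apply HBy|].
    pose proof (norm_submult A x a). pose proof (norm_nonneg A a). pose proof (norm_nonneg A x). nra.
Qed.

Lemma re_Csum_bound {T} (F : T -> C) (l : list T) :
  Rabs (re (Csum (map F l))) <= fold_right (fun t acc => Cmod (F t) + acc) 0 l.
Proof.
  induction l as [|t l IH]; simpl.
  - rewrite Rabs_R0. lra.
  - eapply Rle_trans; [apply Rabs_triang|]. pose proof (Rabs_re_le (F t)). lra.
Qed.

Lemma span_bound : dual_spanned_by_tr A -> forall f, in_dual A f ->
  exists K, forall a s, is_rnorm A a s -> Rabs (re (f a)) <= K * s.
Proof.
  intros Hsp f Hf. destruct (Hsp f Hf) as [l [Hl Hfa]].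
  assert (Hgen : forall l' : list (C * (A -> C) * ((A -> C) -> C)),
    (forall c g m, In (c, g, m) l' -> in_dual A g /\ in_bidual A m) ->
    exists K, forall a s, is_rnorm A a s ->
      fold_right (fun t acc => Cmod (let '(c, g, m) := t in Cmul c (tr_fm A g m a)) + acc) 0 l' <= K * s).
  { induction l' as [|[[c g] m] l' IH]; intros Hl'.
    - exists 0. intros a s Hs. simpl. lra.
    - destruct IH as [K HK]. { intros c' g' m' Hin. apply (Hl' c' g' m'). right. exact Hin. }
      destruct (Hl' c g m (or_introl eq_refl)) as [Hg Hm].
      destruct (in_dual_nonneg g Hg) as [B [HB HBy]].
      destruct Hm as [_ [_ [M HM]]].
      exists (Cmod c * Rabs M * B + K). intros a s Hs. simpl.
      destruct (rnorm_props a s Hs) as [Hs0 [_ Hsx]].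
      specialize (HK a s Hs).
      rewrite Cmod_mul. unfold tr_fm.
      assert (Hdb : dual_bound A (tr_af A a g) (B * s)).
      { split; [nra|]. intros x. unfold tr_af. eapply Rle_trans; [apply HBy|].
        specialize (Hsx x). pose proof (norm_nonneg A x). nra. }
      pose proof (HM _ _ (tr_af_dual a g Hg) Hdb) as Hm'.
      pose proof (Cmod_nonneg c). pose proof (Rle_abs M). pose proof (Rabs_pos M).
      assert (0 <= B * s) by (apply Rmult_le_pos; assumption).
      assert (Cmod (m (tr_af A a g)) <= Rabs M * (B * s)) by (eapply Rle_trans; [exact Hm'|apply Rmult_le_compat_r; assumption]).
      assert (Cmod c * Cmod (m (tr_af A a g)) <= Cmod c * (Rabs M * (B * s))) by nra.
      assert (E : (Cmod c * Rabs M * B + K) * s = Cmod c * (Rabs M * (B * s)) + K * s) by ring.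
      rewrite E. apply Rplus_le_compat; assumption. }
  destruct (Hgen l Hl) as [K HK]. exists K. intros a s Hs.
  rewrite Hfa. eapply Rle_trans; [apply re_Csum_bound|]. apply HK; exact Hs.
Qed.

End Rnorm.

Lemma fchoice {X Y : Type} (P : X -> Y -> Prop) :
  (forall x, exists y, P x y) -> exists f : X -> Y, forall x, P x (f x).
Proof.
  intros H. exists (fun x => proj1_sig (constructive_indefinite_description _ (H x))).
  intros x. exact (proj2_sig (constructive_indefinite_description _ (H x))).
Qed.

Lemma glb_exists (P : R -> Prop) (b : R) : (exists r, P r) -> (forall r, P r -> b <= r) ->
  exists m, (forall r, P r -> m <= r) /\ (forall m', (forall r, P r -> m' <= r) -> m' <= m).
Proof.
  intros [r0 Hr0] Hb.
  destruct (completeness (fun y => P (- y))) as [s [Hub Hlub]].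
  - exists (- b). intros y Hy. apply Hb in Hy. lra.
  - exists (- r0). rewrite Ropp_involutive. exact Hr0.
  - exists (- s). split.
    + intros r Hr. assert (- r <= s) by (apply Hub; rewrite Ropp_involutive; exact Hr). lra.
    + intros m' Hm'. assert (s <= - m'). { apply Hlub. intros y Hy. apply Hm' in Hy. lra. } lra.
Qed.

Section HB.
Variable A : BanachAlgebra.

Notation rs := (rs A).
Notation add := (add A).

Lemma add_swap4 x z v w : add (add x z) (add v w) = add (add x v) (add z w).
Proof.
  rewrite <- !add_assoc. f_equal. rewrite !add_assoc. f_equal. apply add_comm.
Qed.

Lemma V1 x v : add (add x v) (rs (-1) x) = v.
Proof.
  rewrite (add_comm A x v), <- add_assoc, add_neg, add_zero. reflexivity.
Qed.

Lemma V2 x z t1 t2 y : add (add x z) (rs (t1 + t2) y) = add (add x (rs t1 y)) (add z (rs t2 y)).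
Proof. rewrite rs_plus. apply add_swap4. Qed.

Lemma V3 s t x y : add (rs s x) (rs (s * t) y) = rs s (add x (rs t y)).
Proof. rewrite rs_add, rs_rs. reflexivity. Qed.

Lemma V5 x y : add x (rs 0 y) = x.
Proof. rewrite rs0. apply add_zero. Qed.

Definition sublin (q : A -> R) :=
  (forall x y, q (add x y) <= q x + q y) /\ (forall t x, 0 <= t -> q (rs t x) = t * q x).

Lemma sublin_zero q : sublin q -> q (zero A) = 0.
Proof. intros [_ Hh]. rewrite <- (rs0 A (zero A)). rewrite Hh; lra. Qed.

Lemma sublin_lower q : sublin q -> forall x, - q (rs (-1) x) <= q x.
Proof.
  intros Hq x. pose proof (sublin_zero q Hq) as H0. destruct Hq as [Hs _].
  specialize (Hs x (rs (-1) x)). rewrite add_neg in Hs. lra.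
Qed.

Lemma norm_sublin : sublin (norm A).
Proof.
  split.
  - apply norm_triangle.
  - intros t x Ht. rewrite norm_rs, Rabs_right; lra.
Qed.

Lemma Ty q y : sublin q -> exists q', sublin q' /\ (forall x, q' x <= q x) /\ q' (rs (-1) y) <= - q y.
Proof.
  intros Hq.
  pose (phi x t := q (add (add x (rs t y)) (zero A)) - t * q y).
  assert (Hphi : forall x t, phi x t = q (add x (rs t y)) - t * q y)
    by (intros; unfold phi; rewrite add_zero; reflexivity).
  assert (Hex : forall x, exists m, (forall r, (exists t, 0 <= t /\ r = phi x t) -> m <= r) /\
     (forall m', (forall r, (exists t, 0 <= t /\ r = phi x t) -> m' <= r) -> m' <= m)).
  { intros x. apply glb_exists with (b := - q (rs (-1) x)).
    - exists (phi x 0). exists 0. split; [lra|reflexivity].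
    - intros r [t [Ht ->]]. rewrite Hphi.
      destruct Hq as [Hs Hh].
      pose proof (Hs (add x (rs t y)) (rs (-1) x)) as E. rewrite V1, Hh in E by lra. lra. }
  destruct (fchoice _ Hex) as [m Hm].
  assert (Hlow : forall x t, 0 <= t -> m x <= q (add x (rs t y)) - t * q y).
  { intros x t Ht. rewrite <- Hphi. apply (proj1 (Hm x)). exists t; split; [lra|reflexivity]. }
  assert (Hgr : forall x m', (forall t, 0 <= t -> m' <= q (add x (rs t y)) - t * q y) -> m' <= m x).
  { intros x m' H. apply (proj2 (Hm x)). intros r [t [Ht ->]]. rewrite Hphi. apply H; exact Ht. }
  pose proof Hq as [Hs Hh].
  exists m. split; [split|split].
  - intros x z.
    assert (K : forall t1 t2, 0 <= t1 -> 0 <= t2 ->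
              m (add x z) <= (q (add x (rs t1 y)) - t1 * q y) + (q (add z (rs t2 y)) - t2 * q y)).
    { intros t1 t2 H1 H2. eapply Rle_trans; [apply (Hlow _ (t1 + t2)); lra|].
      rewrite V2. pose proof (Hs (add x (rs t1 y)) (add z (rs t2 y))). lra. }
    assert (K2 : forall t2, 0 <= t2 -> m (add x z) - (q (add z (rs t2 y)) - t2 * q y) <= m x).
    { intros t2 H2. apply Hgr. intros t1 H1. pose proof (K t1 t2 H1 H2). lra. }
    assert (m (add x z) - m x <= m z).
    { apply Hgr. intros t2 H2. pose proof (K2 t2 H2). lra. }
    lra.
  - intros s x Hs0. destruct (Req_dec s 0) as [E|E].
    + subst s. rewrite rs0, Rmult_0_l.
      assert (Z : forall t, 0 <= t -> q (add (zero A) (rs t y)) - t * q y = 0).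
      { intros t Ht. rewrite add_zero_l, Hh by lra. ring. }
      apply Rle_antisym.
      * pose proof (Hlow (zero A) 0 (Rle_refl 0)). rewrite Z in H; lra.
      * apply Hgr. intros t Ht. rewrite Z; lra.
    + assert (Hsp : 0 < s) by lra.
      apply Rle_antisym.
      * assert (m (rs s x) / s <= m x).
        { apply Hgr. intros t Ht.
          pose proof (Hlow (rs s x) (s * t) ltac:(nra)) as L.
          rewrite V3, Hh in L by lra.
          apply (Rmult_le_reg_l s); [lra|]. unfold Rdiv.
          replace (s * (m (rs s x) * / s)) with (m (rs s x)) by (field; lra). nra. }
        unfold Rdiv in H. apply (Rmult_le_compat_l s) in H; [|lra].
        replace (s * (m (rs s x) * / s)) with (m (rs s x)) in H by (field; lra). exact H.
      * apply Hgr. intros t Ht.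
        pose proof (Hlow x (t / s) ltac:(apply Rmult_le_pos; [lra|left; apply Rinv_0_lt_compat; lra])) as L.
        assert (Et : t = s * (t / s)) by (field; lra).
        rewrite Et at 1. rewrite V3, Hh by lra.
        apply (Rmult_le_compat_l s) in L; [|lra].
        rewrite Rmult_minus_distr_l in L.
        replace (s * (t / s * q y)) with (t * q y) in L by (field; lra). exact L.
  - intros x. pose proof (Hlow x 0 (Rle_refl 0)). rewrite V5 in H. lra.
  - pose proof (Hlow (rs (-1) y) 1 ltac:(lra)) as L.
    rewrite <- rs_plus in L.
    replace (-1 + 1) with 0 in L by ring. rewrite rs0, sublin_zero in L by exact Hq.
    lra.
Qed.

End HB.

Section HB2.
Variable A : BanachAlgebra.
Notation rs := (rs A).
Notation add := (add A).
Notation sublin := (sublin A).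

Lemma minimal_sublin (q0 : A -> R) : sublin q0 ->
  exists u, sublin u /\ (forall x, u x <= q0 x) /\
    forall q', sublin q' -> (forall x, q' x <= u x) -> forall x, u x <= q' x.
Proof.
  intros Hq0.
  pose (T := {q : A -> R | sublin q /\ forall x, q x <= q0 x}).
  pose (Rl := fun (s t : T) => boolp.asbool (forall x, proj1_sig t x <= proj1_sig s x)).
  assert (t0 : T) by (exists q0; split; [exact Hq0|intros; lra]).
  destruct (@classical_sets.ZL_preorder T t0 Rl) as [t Ht].
  - intros s. apply boolp.asboolT. intros; lra.
  - intros r s t H1 H2. apply boolp.asboolT. apply boolp.asboolW in H1. apply boolp.asboolW in H2.
    intros x. specialize (H1 x). specialize (H2 x). lra.
  - intros Ch Htot.
    destruct (Classical_Prop.classic (exists s, Ch s)) as [[s0 Hs0]|Hno].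
    2:{ exists t0. intros s Hs. exfalso. apply Hno. exists s. exact Hs. }
    assert (Hex : forall x, exists m, (forall r, (exists s, Ch s /\ r = proj1_sig s x) -> m <= r) /\
       (forall m', (forall r, (exists s, Ch s /\ r = proj1_sig s x) -> m' <= r) -> m' <= m)).
    { intros x. apply glb_exists with (b := - q0 (rs (-1) x)).
      - exists (proj1_sig s0 x). exists s0. split; [exact Hs0|reflexivity].
      - intros r [[s [Hs Hsq]] [Hc ->]]. simpl.
        pose proof (sublin_lower A s Hs x). pose proof (Hsq (rs (-1) x)). lra. }
    destruct (fchoice _ Hex) as [m Hm].
    assert (Hlow : forall x s, Ch s -> m x <= proj1_sig s x).
    { intros x s Hs. apply (proj1 (Hm x)). exists s. split; [exact Hs|reflexivity]. }
    assert (Hgr : forall x m', (forall s, Ch s -> m' <= proj1_sig s x) -> m' <= m x).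
    { intros x m' H. apply (proj2 (Hm x)). intros r [s [Hs ->]]. apply H; exact Hs. }
    assert (Hsub : sublin m).
    { split.
      - intros x y.
        assert (K : forall s1 s2, Ch s1 -> Ch s2 -> m (add x y) <= proj1_sig s1 x + proj1_sig s2 y).
        { intros s1 s2 H1 H2. destruct (Htot s1 s2 H1 H2) as [R12|R21];
            apply boolp.asboolW in R12 || apply boolp.asboolW in R21.
          - pose proof (proj1 (proj1 (proj2_sig s2)) x y).
            pose proof (Hlow (add x y) s2 H2). pose proof (R12 x). lra.
          - pose proof (proj1 (proj1 (proj2_sig s1)) x y).
            pose proof (Hlow (add x y) s1 H1). pose proof (R21 y). lra. }
        assert (K2 : forall s2, Ch s2 -> m (add x y) - proj1_sig s2 y <= m x).
        { intros s2 H2. apply Hgr. intros s1 H1. pose proof (K s1 s2 H1 H2). lra. }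
        assert (m (add x y) - m x <= m y).
        { apply Hgr. intros s2 H2. pose proof (K2 s2 H2). lra. }
        lra.
      - intros c x Hc. destruct (Req_dec c 0) as [E|E].
        + subst c. rewrite rs0, Rmult_0_l.
          assert (Z : forall s, Ch s -> proj1_sig s (zero A) = 0).
          { intros s _. apply sublin_zero. exact (proj1 (proj2_sig s)). }
          apply Rle_antisym.
          * rewrite <- (Z s0 Hs0). apply Hlow; exact Hs0.
          * apply Hgr. intros s Hs. rewrite Z by exact Hs. lra.
        + assert (Hcp : 0 < c) by lra.
          apply Rle_antisym.
          * assert (m (rs c x) / c <= m x).
            { apply Hgr. intros s Hs. pose proof (proj2 (proj1 (proj2_sig s))) as Hh.
              pose proof (Hlow (rs c x) _ Hs) as L. rewrite Hh in L by lra.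
              apply (Rmult_le_reg_l c); [lra|]. unfold Rdiv.
              replace (c * (m (rs c x) * / c)) with (m (rs c x)) by (field; lra). exact L. }
            unfold Rdiv in H. apply (Rmult_le_compat_l c) in H; [|lra].
            replace (c * (m (rs c x) * / c)) with (m (rs c x)) in H by (field; lra). exact H.
          * apply Hgr. intros s Hs. pose proof (proj2 (proj1 (proj2_sig s))) as Hh.
            rewrite Hh by lra.
            pose proof (Hlow x _ Hs) as L. apply Rmult_le_compat_l; lra. }
    assert (Hle0 : forall x, m x <= q0 x).
    { intros x. eapply Rle_trans; [apply (Hlow x s0 Hs0)|]. apply (proj2 (proj2_sig s0)). }
    exists (exist _ m (conj Hsub Hle0)). intros s Hs. apply boolp.asboolT. intros x. simpl.
    apply Hlow; exact Hs.
  - destruct t as [u [Hu Huq]]. exists u. split; [exact Hu|split; [exact Huq|]].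
    intros q' Hq' Hle x.
    assert (Hq'0 : forall x, q' x <= q0 x) by (intros z; pose proof (Hle z); pose proof (Huq z); lra).
    pose (s := exist (fun q => sublin q /\ forall x, q x <= q0 x) q' (conj Hq' Hq'0) : T).
    assert (H1 : is_true (Rl (exist _ u (conj Hu Huq)) s)).
    { apply boolp.asboolT. simpl. exact Hle. }
    specialize (Ht s H1). apply boolp.asboolW in Ht. apply Ht.
Qed.

Lemma real_HB (a : A) : exists u : A -> R,
  (forall x y, u (add x y) = u x + u y) /\ (forall t x, u (rs t x) = t * u x) /\
  (forall x, Rabs (u x) <= norm A x) /\ u a = norm A a.
Proof.
  destruct (Ty A (norm A) a (norm_sublin A)) as [q0 [Hq0 [Hq0n Hq0a]]].
  destruct (minimal_sublin q0 Hq0) as [u [Hu [Huq Hmin]]].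
  assert (Hneg : forall y, u (rs (-1) y) = - u y).
  { intros y. destruct (Ty A u y Hu) as [q' [Hq' [Hq'u Hq'y]]].
    pose proof (Hmin q' Hq' Hq'u (rs (-1) y)).
    pose proof (sublin_lower A u Hu y). lra. }
  destruct Hu as [Hs Hh].
  assert (Hadd : forall x y, u (add x y) = u x + u y).
  { intros x y. apply Rle_antisym; [apply Hs|].
    pose proof (Hs (rs (-1) x) (rs (-1) y)). rewrite <- rs_add, !Hneg in H. lra. }
  assert (Hhom : forall t x, u (rs t x) = t * u x).
  { intros t x. destruct (Rle_dec 0 t) as [Ht|Ht]; [apply Hh; exact Ht|].
    replace t with (-1 * - t) by ring. rewrite <- rs_rs, Hneg, Hh by lra. ring. }
  exists u. split; [exact Hadd|split; [exact Hhom|split]].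
  - intros x. apply Rabs_le. split.
    + pose proof (Huq (rs (-1) x)) as H1. pose proof (Hq0n (rs (-1) x)) as H2.
      rewrite Hneg in H1. assert (E : Rabs (-1) = 1) by (rewrite Rabs_left; lra). rewrite norm_rs, E in H2. lra.
    + pose proof (Huq x). pose proof (Hq0n x). lra.
  - apply Rle_antisym.
    + pose proof (Huq a). pose proof (Hq0n a). lra.
    + pose proof (Huq (rs (-1) a)). rewrite Hneg in H. lra.
Qed.

End HB2.

Section CHB.
Variable A : BanachAlgebra.
Notation rs := (rs A).
Notation add := (add A).
Definition Ci : C := mkC 0 1.

Lemma scal_decomp p q (x : A) : scal A (mkC p q) x = add (rs p x) (rs q (scal A Ci x)).
Proof.
  unfold rs. rewrite scal_assoc, <- scal_addl. f_equal. apply C_eq; simpl; ring.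
Qed.

Lemma scal_ii (x : A) : scal A Ci (scal A Ci x) = rs (-1) x.
Proof. unfold rs. rewrite scal_assoc. f_equal. apply C_eq; simpl; ring. Qed.

Lemma scal_i_rs t (x : A) : scal A Ci (rs t x) = rs t (scal A Ci x).
Proof. unfold rs. rewrite !scal_assoc. f_equal. apply C_eq; simpl; ring. Qed.

Lemma complex_HB (a : A) : exists h : A -> C, in_dual A h /\
  (forall x, Cmod (h x) <= 2 * norm A x) /\ re (h a) = norm A a.
Proof.
  destruct (real_HB A a) as [u [Hadd [Hhom [Hb Ha]]]].
  exists (fun x => mkC (u x) (- u (scal A Ci x))).
  assert (Hbound : forall x, Cmod (mkC (u x) (- u (scal A Ci x))) <= 2 * norm A x).
  { intros x. eapply Rle_trans; [apply Cmod_le_sum|]. simpl.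
    rewrite Rabs_Ropp. pose proof (Hb x). pose proof (Hb (scal A Ci x)).
    rewrite norm_scal in H0. 
    assert (Cmod Ci = 1) by (unfold Cmod, Ci; cbn [re im]; replace (0 ^ 2 + 1 ^ 2) with 1 by ring; apply sqrt_1).
    rewrite H1 in H0. lra. }
  split; [split; [|split]|split].
  - intros x y. apply C_eq; simpl.
    + apply Hadd.
    + rewrite scal_addr, Hadd. ring.
  - intros [p q] x. rewrite scal_decomp. apply C_eq; simpl.
    + rewrite Hadd, !Hhom. ring.
    + rewrite scal_addr, scal_i_rs, scal_i_rs, scal_ii, Hadd, !Hhom. ring.
  - exists 2. exact Hbound.
  - exact Hbound.
  - simpl. exact Ha.
Qed.

End CHB.

Lemma geom_tail c m : Coquelicot.Series.is_series (fun k => c * (/4)^(m+k)) (c * (/4)^m * (4/3)).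
Proof.

  assert (G := Coquelicot.Series.is_series_geom (/4) ltac:(rewrite Rabs_right; lra)).
  apply (Coquelicot.Series.is_series_scal_l (c * (/4)^m)) in G.
  assert (E : c * (/4)^m * (4/3) = c * (/4)^m * / (1 - /4)) by field.
  rewrite E.
  eapply is_series_ext; [|exact G].
  intros k. change (c * (/4)^m * (/4)^k = c * (/4)^(m+k)). rewrite pow_add. ring.
Qed.

Lemma ex_series_bd (t : nat -> R) c m : (forall k, Rabs (t k) <= c * (/4)^(m+k)) -> ex_series t.
Proof.
  intros H. apply (ex_series_le t (fun k => c * (/4)^(m+k))).
  - intros k. exact (H k).
  - eexists. apply geom_tail.
Qed.

Lemma tail_bound (t : nat -> R) c m l : (forall k, Rabs (t k) <= c * (/4)^(m+k)) ->
  is_series t l -> Rabs l <= c * (/4)^m * (4/3).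
Proof.
  intros H Hl. apply is_series_unique in Hl. subst l.
  assert (Ha : ex_series (fun k => Rabs (t k))).
  { apply (ex_series_bd _ c m). intros k. rewrite Rabs_Rabsolu. apply H. }
  eapply Rle_trans; [apply Series_Rabs; exact Ha|].
  rewrite <- (is_series_unique _ _ (geom_tail c m)).
  apply Series_le.
  - intros k. split; [apply Rabs_pos|apply H].
  - eexists. apply geom_tail.
Qed.

Section UBP.
Variable A : BanachAlgebra.
Variable a : nat -> A.
Variable h : nat -> A -> C.
Hypothesis Hh : forall n, in_dual A (h n).
Hypothesis Hhb : forall n x, Cmod (h n x) <= 2 * norm A x.
Hypothesis Hha : forall n, re (h n (a n)) = norm A (a n).

Definition cr (t : R) (z : C) : C := mkC (t * re z) (t * im z).
Definition ee (n : nat) : R := (/4)^n.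

Fixpoint PS (n : nat) : A -> C :=
  match n with
  | O => fun _ => C0
  | S k => let p := PS k in
      fun x => Cadd (p x) (cr (ee k * (if Rle_dec 0 (re (p (a k))) then 1 else -1)) (h k x))
  end.

Definition sg (k : nat) : R := if Rle_dec 0 (re (PS k (a k))) then 1 else -1.
Definition term (k : nat) (x : A) : C := cr (ee k * sg k) (h k x).

Lemma PS_S k x : PS (S k) x = Cadd (PS k x) (term k x).
Proof. reflexivity. Qed.

Lemma Rabs_sg k : Rabs (sg k) = 1.
Proof. unfold sg. destruct Rle_dec; [apply Rabs_R1|]. rewrite Rabs_left; lra. Qed.

Lemma ee_pos k : 0 < ee k.
Proof. unfold ee. apply pow_lt. lra. Qed.

Lemma term_re_bd k x : Rabs (re (term k x)) <= (2 * norm A x) * (/4)^(0 + k).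
Proof.
  unfold term, cr; simpl. rewrite !Rabs_mult, Rabs_sg, (Rabs_right (ee k)) by (left; apply ee_pos).
  pose proof (Rabs_re_le (h k x)). pose proof (Hhb k x). pose proof (ee_pos k). unfold ee in *. nra.
Qed.

Lemma term_im_bd k x : Rabs (im (term k x)) <= (2 * norm A x) * (/4)^(0 + k).
Proof.
  unfold term, cr; simpl. rewrite !Rabs_mult, Rabs_sg, (Rabs_right (ee k)) by (left; apply ee_pos).
  pose proof (Rabs_im_le (h k x)). pose proof (Hhb k x). pose proof (ee_pos k). unfold ee in *. nra.
Qed.

Lemma term_re_bd' n k x : Rabs (re (term (n + k) x)) <= (2 * norm A x) * (/4)^(n + k).
Proof. apply term_re_bd. Qed.

Definition fU (x : A) : C := mkC (Series (fun k => re (term k x))) (Series (fun k => im (term k x))).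

Lemma ex_re x : ex_series (fun k => re (term k x)).
Proof. apply (ex_series_bd (fun k => re (term k x)) (2 * norm A x) 0). intros k. apply term_re_bd. Qed.
Lemma ex_im x : ex_series (fun k => im (term k x)).
Proof. apply (ex_series_bd (fun k => im (term k x)) (2 * norm A x) 0). intros k. apply term_im_bd. Qed.

Lemma partial n x : is_series (fun k => re (term (n + k) x)) (re (fU x) - re (PS n x)).
Proof.
  induction n as [|n IH].
  - simpl. rewrite Rminus_0_r. apply Series_correct, ex_re.
  - assert (E : Hierarchy.plus (re (fU x) - re (PS (S n) x)) (re (term (n + 0) x)) = re (fU x) - re (PS n x)).
    { change (Hierarchy.plus (re (fU x) - re (PS (S n) x)) (re (term (n + 0) x)))
        with ((re (fU x) - re (PS (S n) x)) + (re (term (n + 0) x))).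
      rewrite PS_S, Nat.add_0_r. simpl. ring. }
    rewrite <- E in IH. apply (@is_series_incr_1 R_AbsRing R_NormedModule (fun k => re (term (n + k) x))) in IH.
    eapply is_series_ext; [|exact IH]. intros k. simpl. rewrite Nat.add_succ_r. reflexivity.
Qed.

Lemma fU_key n : ee n * norm A (a n) / 3 <= Rabs (re (fU (a n))).
Proof.
  set (x := a n).
  pose proof (tail_bound _ (2 * norm A x) (S n) _ (fun k => term_re_bd' (S n) k x) (partial (S n) x)) as T.
  rewrite PS_S in T. cbn [re Cadd] in T.
  assert (Et : re (term n x) = ee n * sg n * norm A x).
  { unfold term, cr. simpl. unfold x. rewrite Hha. reflexivity. }
  rewrite Et in T. simpl pow in T. fold (ee n) in T.
  pose proof (ee_pos n). pose proof (norm_nonneg A x).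
  assert (Hsg : ee n * norm A x <= Rabs (re (PS n x) + ee n * sg n * norm A x)).
  { unfold sg. fold x. destruct Rle_dec as [Hr|Hr].
    - rewrite Rabs_right; nra.
    - rewrite Rabs_left; nra. }
  set (P := re (PS n x) + ee n * sg n * norm A x) in *.
  set (F := re (fU x)) in *.
  assert (H1 : Rabs P <= Rabs (F - P) + Rabs F).
  { pose proof (Rabs_triang (P - F) F) as H1. replace (P - F + F) with P in H1 by ring.
    rewrite Rabs_minus_sym in H1. lra. }
  assert (E2 : 2 * norm A x * (/ 4 * ee n) * (4 / 3) = 2 / 3 * (ee n * norm A x)) by field.
  rewrite E2 in T. unfold Rdiv. lra.
Qed.

Lemma fU_dual : in_dual A fU.
Proof.
  split; [|split].
  - intros x y. apply C_eq; simpl.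
    + rewrite <- Series_plus by apply ex_re. apply Series_ext. intros k.
      unfold term, cr; simpl. rewrite (proj1 (Hh k)). simpl. ring.
    + rewrite <- Series_plus by apply ex_im. apply Series_ext. intros k.
      unfold term, cr; simpl. rewrite (proj1 (Hh k)). simpl. ring.
  - intros z x. apply C_eq; simpl.
    + rewrite <- !Series_scal_l, <- Series_minus.
      2,3: first [apply (ex_series_scal_l (K := R_AbsRing) (V := R_NormedModule)); first [apply ex_re|apply ex_im]].
      apply Series_ext. intros k. unfold term, cr; simpl. rewrite (proj1 (proj2 (Hh k))). simpl. ring.
    + rewrite <- !Series_scal_l, <- Series_plus.
      2,3: first [apply (ex_series_scal_l (K := R_AbsRing) (V := R_NormedModule)); first [apply ex_re|apply ex_im]].
      apply Series_ext. intros k. unfold term, cr; simpl. rewrite (proj1 (proj2 (Hh k))). simpl. ring.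
  - exists (2 * ((2 * 1) * 1 * (4/3))). intros x.
    eapply Rle_trans; [apply Cmod_le_sum|]. unfold fU; cbn [re im].
    pose proof (tail_bound _ (2 * norm A x) 0 _ (fun k => term_re_bd k x) (Series_correct _ (ex_re x))).
    pose proof (tail_bound _ (2 * norm A x) 0 _ (fun k => term_im_bd k x) (Series_correct _ (ex_im x))).
    simpl pow in *. lra.
Qed.

End UBP.

Lemma lower_bound (A : BanachAlgebra) : dual_spanned_by_tr A ->
  exists c, 0 < c /\ forall a s, is_rnorm A a s -> c * norm A a <= s.
Proof.
  intros Hsp. apply NNPP. intros Hno.
  pose (Kn (n : nat) := INR (S n) * 4 ^ n).
  assert (Kpos : forall n, 0 < Kn n).
  { intros n. unfold Kn. apply Rmult_lt_0_compat; [apply lt_0_INR; lia|apply pow_lt; lra]. }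
  assert (Hex : forall n, exists p : A * R, is_rnorm A (fst p) (snd p) /\ snd p < / Kn n * norm A (fst p)).
  { intros n. apply NNPP. intros Hn. apply Hno. exists (/ Kn n). split.
    - apply Rinv_0_lt_compat, Kpos.
    - intros a s Hs. apply Rnot_lt_le. intros Hlt. apply Hn. exists (a, s). simpl. split; assumption. }
  destruct (fchoice _ Hex) as [p Hp].
  destruct (fchoice _ (complex_HB A)) as [H HH].
  pose (a n := fst (p n)).
  pose (h n := H (a n)).
  assert (Hh : forall n, in_dual A (h n)) by (intros n; apply (HH (a n))).
  assert (Hhb : forall n x, Cmod (h n x) <= 2 * norm A x) by (intros n; apply (HH (a n))).
  assert (Hha : forall n, re (h n (a n)) = norm A (a n)) by (intros n; apply (HH (a n))).
  pose proof (fU_dual A a h Hh Hhb) as Hf.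
  destruct (span_bound A Hsp _ Hf) as [K HK].
  destruct (INR_unbounded (3 * K)) as [N HN].
  destruct (Hp N) as [Hr Hlt].
  pose proof (fU_key A a h Hhb Hha N) as Hkey.
  pose proof (HK _ _ Hr) as Hb. fold (a N) in Hr, Hlt, Hb.
  destruct (rnorm_props A _ _ Hr) as [Hs0 _].
  set (s := snd (p N)) in *. set (x := a N) in *.
  set (f := fU A a h) in *.
  assert (Hx : 0 < norm A x).
  { pose proof (Rinv_0_lt_compat _ (Kpos N)). pose proof (norm_nonneg A x). nra. }
  assert (Hee : ee N * Kn N = INR (S N)).
  { unfold ee, Kn. rewrite pow_inv. field. apply pow_nonzero. lra. }
  (* ee N * ||x|| / 3 <= K s < K ||x|| / Kn *)
  assert (HK0 : 0 <= K).
  { pose proof (Rabs_pos (re (f x))). destruct (Rle_dec 0 K); [assumption|].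
    assert (K * s <= 0) by nra. pose proof (ee_pos N). nra. }
  assert (ee N * norm A x / 3 <= K * (/ Kn N * norm A x)).
  { eapply Rle_trans; [exact Hkey|]. eapply Rle_trans; [exact Hb|]. apply Rmult_le_compat_l; lra. }
  assert (ee N * Kn N * norm A x <= 3 * K * norm A x).
  { pose proof (Kpos N). apply (Rmult_le_compat_l (3 * Kn N)) in H0; [|lra].
    replace (3 * Kn N * (ee N * norm A x / 3)) with (ee N * Kn N * norm A x) in H0 by field.
    replace (3 * Kn N * (K * (/ Kn N * norm A x))) with (3 * K * norm A x) in H0 by (field; lra).
    exact H0. }
  rewrite Hee in H1. apply Rmult_le_reg_r in H1; [|exact Hx].
  rewrite S_INR in H1. lra.
Qed.

Lemma right_part (A : BanachAlgebra) : dual_spanned_by_tr A ->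
     exists c K, 0 < c /\ 0 < K /\
       forall a : A, exists s, is_rnorm A a s /\
         c * norm A a <= s /\ s <= K * norm A a.
Proof.
  intros Hsp. destruct (lower_bound A Hsp) as [c [Hc Hlb]].
  exists c, 1. split; [exact Hc|split; [lra|]].
  intros a. destruct (rnorm_exists A a) as [s Hs]. exists s. split; [exact Hs|split].
  - apply Hlb; exact Hs.
  - destruct (rnorm_props A a s Hs) as [_ [H _]]. lra.
Qed.

Definition opA (A : BanachAlgebra) : BanachAlgebra.
Proof.
  refine (@Build_BanachAlgebra (car A) (add A) (zero A) (opp A) (scal A)
    (fun a b => mul A b a) (norm A) (add_assoc A) (add_comm A) (add_zero A) (add_opp A)
    (scal_one A) (scal_assoc A) (scal_addl A) (scal_addr A) _ _ _ _ _
    (norm_nonneg A) (norm_eq0 A) (norm_triangle A) (norm_scal A) _ (complete A)).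
  - intros a b c. symmetry. apply mul_assoc.
  - intros a b c. apply mul_addr.
  - intros a b c. apply mul_addl.
  - intros z a b. apply mul_scalr.
  - intros z a b. apply mul_scall.
  - intros a b. rewrite Rmult_comm. apply norm_submult.
Defined.

Lemma sq_to_tr (A : BanachAlgebra) : dual_spanned_by_sq A -> dual_spanned_by_tr (opA A).
Proof.
  intros Hsp f Hf. destruct (Hsp f Hf) as [l [Hl Hfa]].
  exists (map (fun t => let '(c, m, g) := t in (c, g, m)) l). split.
  - intros c g m Hin. apply in_map_iff in Hin. destruct Hin as [[[c' m'] g'] [E Hin]].
    injection E; intros; subst. destruct (Hl _ _ _ Hin) as [H1 H2]. split; assumption.
  - intros a. rewrite (Hfa a), map_map. f_equal. apply map_ext. intros [[c m] g]. reflexivity.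
Qed.

Theorem corollary1 (A : BanachAlgebra) :
  (right_faithful A -> dual_spanned_by_tr A ->
     exists c K, 0 < c /\ 0 < K /\
       forall a : A, exists s, is_rnorm A a s /\
         c * norm A a <= s /\ s <= K * norm A a) /\
  (left_faithful A -> dual_spanned_by_sq A ->
     exists c K, 0 < c /\ 0 < K /\
       forall a : A, exists s, is_lnorm A a s /\
         c * norm A a <= s /\ s <= K * norm A a).
Proof.
  split.
  - intros _ Hsp. exact (right_part A Hsp).
  - intros _ Hsp. exact (right_part (opA A) (sq_to_tr A Hsp)).
Qed.
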